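(* If $n$ is even, then there exists a line spread $\mathcal F$ of $\mathrm{PG}(2n-1,q)$ such that every line of $\mathcal F$ is scattered with respect to the Desarguesian spread $\mathcal S$, i.e. meets every element of $\mathcal S$ in at most one point.
   Context: Let $q$ be a prime power, $n>1$ an integer, $F=\mathbb F_q\subset M=\mathbb F_{q^n}\subset L=\mathbb F_{q^{2n}}$. Regard $L$ as a $2n$-dimensional $F$-vector space; $\mathrm{PG}(2n-1,q)$ has as points the subspaces $Fz$, $z\in L^*$, and lines the 2-dimensional $F$-subspaces. $\mathcal S$ is the Desarguesian spread of $(n-1)$-subspaces of $\mathrm{PG}(2n-1,q)$ consisting of the projective subspaces determined by the one-dimensional $M$-subspaces $Mz$, $z\in L^*$. A line spread is a set of lines partitioning the point set. A set of points is scattered with respect to a spread if it meets each spread element in at most one point. *)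

(* Defs.v *)
From HB Require Import structures.
From mathcomp Require Import all_boot all_order all_algebra all_field.
Set Implicit Arguments. Unset Strict Implicit. Unset Printing Implicit Defensive.
Import GRing.Theory.
Local Open Scope ring_scope.

(* L is a finite field of order q^(2n).  The subfields F = GF(q) and
   M = GF(q^n) are the fixed fields of x |-> x^q and x |-> x^(q^n). *)
Section Geom.
Variable L : finFieldType.

Definition subF (q : nat) : {set L} := [set a : L | a ^+ q == a].
Definition subM (q n : nat) : {set L} := [set a : L | a ^+ (q ^ n) == a].

(* the one-dimensional F-subspace F z (a projective point when z != 0) *)
Definition Fspan (q : nat) (z : L) : {set L} := [set a * z | a in subF q].

(* the one-dimensional M-subspace M z (an element of the Desarguesian spread) *)
Definition Mspan (q n : nat) (z : L) : {set L} := [set a * z | a in subM q n].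

Definition Fspan2 (q : nat) (x y : L) : {set L} :=
  [set a * x + b * y | a in subF q, b in subF q].

(* a line of PG(2n-1,q): a 2-dimensional F-subspace of L *)
Definition is_line (q : nat) (l : {set L}) : Prop :=
  exists x y : L, [/\ x != 0, y \notin Fspan q x & l = Fspan2 q x y].

Definition line_spread (q : nat) (S : {set {set L}}) : Prop :=
  (forall l, l \in S -> is_line q l) /\
  (forall z : L, z != 0 -> exists! l, l \in S /\ Fspan q z \subset l).

Definition scattered_line (q n : nat) (l : {set L}) : Prop :=
  forall w u v : L, w != 0 -> u != 0 -> v != 0 ->
    Fspan q u \subset l -> Fspan q v \subset l ->
    Fspan q u \subset Mspan q n w -> Fspan q v \subset Mspan q n w ->
    Fspan q u = Fspan q v.
End Geom.

(* Main.v *)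
Require Import Defs.
From HB Require Import structures.
From mathcomp Require Import all_boot all_order all_algebra all_field all_fingroup all_solvable.
From mathcomp Require Import ring zify.
Set Implicit Arguments. Unset Strict Implicit. Unset Printing Implicit Defensive.
Import GRing.Theory.
Local Open Scope ring_scope.

Section Pf.
Variables (p k q n : nat) (L : finFieldType).
Hypotheses (pp : prime p) (k0 : (0 < k)%N) (qE : q = (p ^ k)%N) (n1 : (1 < n)%N)
  (nev : ~~ odd n) (cardL : #|L| = (q ^ (2 * n))%N).

Lemma q_gt1 : (1 < q)%N.
Proof. rewrite qE; apply: (leq_trans (prime_gt1 pp)); rewrite -{1}(expn1 p); exact: leq_pexp2l (prime_gt0 pp) k0. Qed.

Lemma pcharL : p \in [pchar L].
Proof. by apply: (@card_finPcharP L p (k * (2 * n))) => //; rewrite cardL qE -expnM. Qed.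

Lemma natq j : [pchar L].-nat (q ^ j)%N.
Proof.
rewrite (eq_pnat _ (pcharf_eq pcharL)) qE -expnM pnatX pnat_id //.
Qed.

Lemma frD j (x y : L) : (x + y) ^+ (q ^ j) = x ^+ (q ^ j) + y ^+ (q ^ j).
Proof. exact: exprDn_pchar (natq j). Qed.

Lemma fr0 j : (0 : L) ^+ (q ^ j) = 0.
Proof. by rewrite expr0n expn_eq0 (negbTE (lt0n_neq0 (ltnW q_gt1))). Qed.

Lemma frN j (x : L) : (- x) ^+ (q ^ j) = - x ^+ (q ^ j).
Proof. by apply/eqP; rewrite -addr_eq0 -frD addrC subrr fr0. Qed.

Lemma frB j (x y : L) : (x - y) ^+ (q ^ j) = x ^+ (q ^ j) - y ^+ (q ^ j).
Proof. by rewrite frD frN. Qed.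

Lemma frq (x y : L) : (x + y) ^+ q = x ^+ q + y ^+ q.
Proof. by have := frD 1 x y; rewrite expn1. Qed.
Lemma frqN (x : L) : (- x) ^+ q = - x ^+ q.
Proof. by have := frN 1 x; rewrite expn1. Qed.
Lemma frq0 : (0 : L) ^+ q = 0.
Proof. by have := fr0 1; rewrite expn1. Qed.

Lemma fr_card (x : L) : x ^+ (q ^ n) ^+ (q ^ n) = x.
Proof. by rewrite -exprM -expnD addnn -mul2n -cardL expf_card. Qed.


Lemma card_gt1 : (1 < #|L|)%N.
Proof. exact: finNzRing_gt1. Qed.

Lemma prim_exists : exists g : L, (#|L|.-1).-primitive_root g.
Proof.
have N0 : (0 < #|L|.-1)%N by rewrite -ltnS prednK ?card_gt1 // ltnW // card_gt1.
have : has (#|L|.-1).-primitive_root (enum (predC1 (0:L))).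
  apply: has_prim_root => //.
- apply/allP => x; rewrite mem_enum /= => nx0; rewrite unity_rootE.
  have := expf_card x; rewrite -(prednK (ltnW card_gt1)) exprS.
  by move=> h; apply/eqP; apply: (mulfI nx0); rewrite h mulr1.
- exact: enum_uniq.
- by rewrite -cardE cardC1.
by case/hasP => g _ hg; exists g.
Qed.


Local Notation Q := (q ^ n)%N.

Lemma Q_gt1 : (1 < Q)%N.
Proof.
apply: (leq_trans q_gt1); rewrite -{1}(expn1 q).
exact: leq_pexp2l (ltnW q_gt1) (ltnW n1).
Qed.

Lemma cardQ : #|L|.-1 = (Q.-1 * Q.+1)%N.
Proof.
rewrite cardL mul2n -addnn expnD.
have := Q_gt1; move: (q ^ n)%N => m hm; nia.
Qed.

Lemma dvd_q2 : ((q * q).-1 %| Q.-1)%N.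
Proof.
rewrite -(even_halfK nev) -muln2 mulnC expnM.
by rewrite (_ : (q * q = q ^ 2)%N) ?dvdn_pred_predX // expnS expn1.
Qed.

Lemma dvd_q1 : (q.+1 %| Q.-1)%N.
Proof.
apply: dvdn_trans dvd_q2.
apply/dvdnP; exists q.-1; have := q_gt1; move: q => m hm; nia.
Qed.


Section Gam.
Variable gam : L.
Hypothesis gprim : (#|L|.-1).-primitive_root gam.

Lemma gam_neq0 : gam != 0.
Proof.
apply/eqP=> g0; have := prim_expr_order gprim; rewrite g0 expr0n.
have N0 : (#|L|.-1 == 0)%N = false.
  by apply/negbTE; rewrite -lt0n -ltnS prednK ?card_gt1 // ltnW // card_gt1.
by rewrite N0 => /eqP; rewrite eq_sym oner_eq0.
Qed.

Lemma gam_not1 x m : (0 < x)%N -> (1 < m)%N -> (x * m)%N = #|L|.-1 -> gam ^+ x != 1.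
Proof.
move=> x0 m1 xm; rewrite -(prim_order_dvd gprim) -xm.
apply/negP => /(dvdn_leq x0) => h; move: h x0 m1; clear; nia.
Qed.

Lemma gam_1 x : (#|L|.-1 %| x)%N -> gam ^+ x = 1.
Proof. by rewrite (prim_order_dvd gprim) => /eqP. Qed.

Lemma expr_pred (x : L) m : (0 < m)%N -> x ^+ m.-1 = 1 -> x ^+ m = x.
Proof. by move=> m0 h; rewrite -(prednK m0) exprS h mulr1. Qed.

Lemma expr_pred' (x : L) m : (0 < m)%N -> x != 0 -> x ^+ m = x -> x ^+ m.-1 = 1.
Proof.
move=> m0 x0; rewrite -{1}(prednK m0) exprS => h.
by apply: (mulfI x0); rewrite h mulr1.
Qed.


Local Notation cj x := (x ^+ Q).

Lemma cjD (x y : L) : cj (x + y) = cj x + cj y. Proof. exact: frD. Qed.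
Lemma cjN (x : L) : cj (- x) = - cj x. Proof. exact: frN. Qed.
Lemma cjB (x y : L) : cj (x - y) = cj x - cj y. Proof. exact: frB. Qed.
Lemma cjM (x y : L) : cj (x * y) = cj x * cj y. Proof. exact: exprMn. Qed.
Lemma cjV (x : L) : cj (x^-1) = (cj x)^-1. Proof. exact: exprVn. Qed.
Lemma cjK (x : L) : cj (cj x) = x. Proof. exact: fr_card. Qed.
Lemma cj1 : cj (1 : L) = 1. Proof. exact: expr1n. Qed.
Lemma cj0 : cj (0 : L) = 0. Proof. exact: fr0. Qed.
Lemma cjq (x : L) : cj (x ^+ q) = (cj x) ^+ q.
Proof. by rewrite -!exprM mulnC. Qed.

Definition th := gam.
Definition thb := cj gam.

Lemma th_ne : thb - th != 0.
Proof.
rewrite subr_eq0 /thb /th; apply/eqP => h.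
have := expr_pred' (ltnW Q_gt1) gam_neq0 h.
apply/eqP; apply: (gam_not1 (x := Q.-1) (m := Q.+1)).
- by rewrite -ltnS prednK ?Q_gt1 // ltnW // Q_gt1.
- by rewrite ltnS ltnW // Q_gt1.
- by rewrite cardQ.
Qed.

Definition X (z : L) := z + cj z.
Definition Y (z : L) := th * z + thb * cj z.

Lemma XM z : cj (X z) = X z. Proof. by rewrite /X cjD cjK addrC. Qed.
Lemma YM z : cj (Y z) = Y z.
Proof. by rewrite /Y cjD !cjM cjK /thb cjK addrC. Qed.

Lemma XYinj z : X z = 0 -> Y z = 0 -> z = 0.
Proof.
rewrite /X /Y => hx hy.
have hc : cj z = - z by apply/eqP; rewrite -addr_eq0 addrC hx.
move: hy; rewrite hc mulrN -mulrBl => /eqP; rewrite mulf_eq0 => /orP [|/eqP //].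
by rewrite -oppr_eq0 opprB (negbTE th_ne).
Qed.

Lemma XL (c z : L) : cj c = c -> X (c * z) = c * X z.
Proof. by move=> hc; rewrite /X cjM hc mulrDr. Qed.
Lemma YL (c z : L) : cj c = c -> Y (c * z) = c * Y z.
Proof. by move=> hc; rewrite /Y cjM hc; ring. Qed.
Lemma XD z w : X (z + w) = X z + X w. Proof. by rewrite /X cjD; ring. Qed.
Lemma YD z w : Y (z + w) = Y z + Y w. Proof. by rewrite /Y cjD; ring. Qed.

Definition aa := gam ^+ Q.+1.
Definition u0 := thb / (thb - th).
Definition v0 := (th - thb)^-1.
Definition g1 (z : L) := u0 * (Y z) ^+ q + v0 * (aa * (X z) ^+ q).

Lemma cj_u0 : cj u0 = th / (th - thb).
Proof. by rewrite /u0 cjM cjV cjB /thb cjK. Qed.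
Lemma cj_v0 : cj v0 = (thb - th)^-1.
Proof. by rewrite /v0 cjV cjB /thb cjK. Qed.

Lemma X_comb (al be : L) : cj al = al -> cj be = be -> X (u0 * al + v0 * be) = al.
Proof.
move=> ha hb; rewrite /X cjD (cjM u0) (cjM v0) cj_u0 cj_v0 ha hb /u0 /v0.
have h1 := th_ne; have h2 : th - thb != 0 by rewrite -opprB oppr_eq0.
field; rewrite ?h1 ?h2 //.
Qed.


Lemma Y_comb (al be : L) : cj al = al -> cj be = be -> Y (u0 * al + v0 * be) = be.
Proof.
move=> ha hb; rewrite /Y cjD (cjM u0) (cjM v0) cj_u0 cj_v0 ha hb /u0 /v0 /thb.
have h1 := th_ne; have h2 : th - thb != 0 by rewrite -opprB oppr_eq0.
by field; rewrite ?h1 ?h2.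
Qed.

Lemma cjqM (x : L) : cj x = x -> cj (x ^+ q) = x ^+ q.
Proof. by move=> h; rewrite cjq h. Qed.

Lemma N_Q : #|L|.-1 = (Q.+1 * Q.-1)%N.
Proof. by rewrite cardQ mulnC. Qed.

Lemma aaM : cj aa = aa.
Proof.
apply: expr_pred; first exact: ltnW Q_gt1.
by rewrite /aa -exprM gam_1 // N_Q.
Qed.

Lemma aa_neq0 : aa != 0.
Proof. by rewrite expf_neq0 // gam_neq0. Qed.

Lemma Qm1_gt0 : (0 < Q.-1)%N.
Proof. by rewrite -ltnS prednK ?Q_gt1 // ltnW // Q_gt1. Qed.

Lemma aa_notpow (r : L) : r != 0 -> cj r = r -> r ^+ q.+1 != aa.
Proof.
move=> r0 rM; apply/eqP => hr.
pose c := (Q.-1 %/ q.+1)%N.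
have hc : (c * q.+1 = Q.-1)%N by rewrite /c divnK // dvd_q1.
have c0 : (0 < c)%N.
  rewrite /c divn_gt0 //; apply: dvdn_leq; [exact: Qm1_gt0 | exact: dvd_q1].
have h1 : aa ^+ c = 1.
  by rewrite -hr -exprM mulnC hc; apply: expr_pred' => //; exact: ltnW Q_gt1.
move: h1; rewrite /aa -exprM; apply/eqP.
apply: (gam_not1 (m := q.+1)).
- by rewrite muln_gt0 c0.
- by rewrite ltnS ltnW // q_gt1.
- by rewrite -mulnA hc N_Q.
Qed.

Lemma Xg1 z : X (g1 z) = (Y z) ^+ q.
Proof. by rewrite /g1 X_comb // ?cjM ?aaM cjqM // ?XM ?YM. Qed.

Lemma Yg1 z : Y (g1 z) = aa * (X z) ^+ q.
Proof. by rewrite /g1 Y_comb // ?cjM ?aaM cjqM // ?XM ?YM. Qed.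

Lemma g1_noeig (m z : L) : cj m = m -> g1 z = m * z -> z = 0.
Proof.
move=> mM hz.
have e1 : (Y z) ^+ q = m * X z by rewrite -Xg1 hz XL.
have e2 : aa * (X z) ^+ q = m * Y z by rewrite -Yg1 hz YL.
have [x0|x0] := eqVneq (X z) 0.
  apply: XYinj => //; apply/eqP; move: e1; rewrite x0 mulr0 => /eqP.
  by rewrite expf_eq0 => /andP[].
have [y0|y0] := eqVneq (Y z) 0.
  by move: e2; rewrite y0 mulr0 => /eqP; rewrite mulf_eq0 (negbTE aa_neq0) expf_eq0 (negbTE x0) andbF.
have rM : cj (Y z / X z) = Y z / X z by rewrite cjM cjV XM YM.
have r0 : Y z / X z != 0 by rewrite mulf_neq0 ?invr_eq0.
have := aa_notpow r0 rM; rewrite exprS exprMn exprVn e1.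
have hx : (X z) ^+ q != 0 by rewrite expf_neq0.
move=> /negP; case; apply/eqP.
rewrite [RHS](_ : aa = (aa * X z ^+ q) / X z ^+ q); last by field.
by rewrite e2; field; rewrite hx x0.
Qed.


Definition gg (z : L) := z + g1 z.

Lemma g1D z w : g1 (z + w) = g1 z + g1 w.
Proof. by rewrite /g1 XD YD !frq; ring. Qed.

Lemma g1L (c z : L) : cj c = c -> g1 (c * z) = c ^+ q * g1 z.
Proof. by move=> hc; rewrite /g1 XL // YL // !exprMn; ring. Qed.

Lemma cjm1 : cj (-1 : L) = -1. Proof. by rewrite cjN cj1. Qed.
Lemma qm1 : (-1 : L) ^+ q = -1. Proof. by rewrite frqN expr1n. Qed.

Lemma g1N z : g1 (- z) = - g1 z.
Proof. by rewrite -mulN1r g1L ?cjm1 // qm1 mulN1r. Qed.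

Lemma gg_lin (c z : L) : cj c = c -> gg (c * z) = c * z + c ^+ q * g1 z.
Proof. by move=> hc; rewrite /gg g1L. Qed.

Lemma gg_inj : injective gg.
Proof.
move=> z1 z2 h; apply/eqP; rewrite -subr_eq0; apply/eqP.
apply: (@g1_noeig (-1)); first exact: cjm1.
move: h; rewrite /gg => /eqP; rewrite -subr_eq0 => /eqP h.
rewrite g1D g1N mulN1r; apply/eqP; rewrite -subr_eq0; apply/eqP.
by rewrite -h; ring.
Qed.

Lemma gg0 : gg 0 = 0.
Proof. by rewrite -(mul0r 0) gg_lin ?cj0 // frq0 !mul0r addr0. Qed.


Definition ee := (Q.-1 %/ (q * q).-1 * Q.+1)%N.
Definition om := gam ^+ ee.

Lemma dd_gt0 : (0 < Q.-1 %/ (q * q).-1)%N.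
Proof.
have h2 : (0 < (q * q).-1)%N by have := q_gt1; clear; nia.
rewrite divn_gt0 //; apply: dvdn_leq; [exact: Qm1_gt0 | exact: dvd_q2].
Qed.

Lemma ee_q2 : (ee * (q * q).-1 = Q.-1 * Q.+1)%N.
Proof. by rewrite /ee mulnAC divnK // dvd_q2. Qed.

Lemma om_neq0 : om != 0. Proof. by rewrite expf_neq0 // gam_neq0. Qed.

Lemma omM : cj om = om.
Proof.
apply: expr_pred; first exact: ltnW Q_gt1.
rewrite /om -exprM gam_1 // cardQ /ee -mulnA mulnC.
by apply: dvdn_mull; rewrite mulnC.
Qed.

Lemma om_qq : (om ^+ q) ^+ q = om.
Proof.
rewrite -exprM; apply: expr_pred; first by have := q_gt1; clear; nia.
by rewrite /om -exprM gam_1 // ee_q2 cardQ.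
Qed.

Lemma om_notF : om ^+ q != om.
Proof.
apply/eqP => h.
have := expr_pred' (ltnW q_gt1) om_neq0 h; rewrite /om -exprM; apply/eqP.
apply: (gam_not1 (m := q.+1)).
- rewrite /ee !muln_gt0 dd_gt0 /=; have := q_gt1; clear; lia.
- by rewrite ltnS ltnW // q_gt1.
- rewrite cardQ -ee_q2 -mulnA; congr (_ * _)%N; have := q_gt1; clear; nia.
Qed.

Definition sF := om + om ^+ q.
Definition pF := - (om * om ^+ q).

Lemma om2 : om * om = sF * om + pF.
Proof. by rewrite /sF /pF; ring. Qed.

Lemma inF (x : L) : (x \in subF L q) = (x ^+ q == x).
Proof. by rewrite /subF inE. Qed.

Lemma inM (x : L) : (x \in subM L q n) = (cj x == x).
Proof. by rewrite /subM inE. Qed.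

Lemma sF_F : sF ^+ q = sF.
Proof. by rewrite /sF frq om_qq addrC. Qed.

Lemma pF_F : pF ^+ q = pF.
Proof. by rewrite /pF frqN exprMn om_qq mulrC. Qed.

Lemma F_M (a : L) : a ^+ q = a -> cj a = a.
Proof.
move=> ha; elim: n => [|j IH]; first by rewrite expr1.
by rewrite expnS exprM ha IH.
Qed.


Definition kP (c : L) := exists a b, [/\ a ^+ q = a, b ^+ q = b & c = a + b * om].

Lemma kP_M c : kP c -> cj c = c.
Proof. by case=> a [b [ha hb ->]]; rewrite cjD cjM omM !F_M. Qed.

Lemma kP_q c : kP c -> exists a b, [/\ a ^+ q = a, b ^+ q = b, c = a + b * om
  & c ^+ q = a + b * om ^+ q].
Proof.
case=> a [b [ha hb ->]]; exists a, b; split => //.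
by rewrite frq exprMn ha hb.
Qed.

Lemma kP_mul c d : kP c -> kP d -> kP (c * d).
Proof.
case=> a [b [ha hb ->]] [a' [b' [ha' hb' ->]]].
exists (a * a' + b * b' * pF), (a * b' + b * a' + b * b' * sF); split.
- by rewrite frq !exprMn ha hb ha' hb' pF_F.
- by rewrite !frq !exprMn ha hb ha' hb' sF_F.
- have := om2; move=> h.
  rewrite (_ : (a + b * om) * (a' + b' * om) = a * a' + (a * b' + b * a') * om + b * b' * (om * om)); last by ring.
  by rewrite h; ring.
Qed.

Lemma om_nF (a : L) : a ^+ q = a -> om != a.
Proof. by move=> ha; apply/eqP => h; move: om_notF; rewrite h ha eqxx. Qed.

Lemma kP_inv c : kP c -> c != 0 -> kP c^-1.
Proof.
case=> a [b [ha hb ->]] c0.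
pose c' := a + b * sF - b * om.
have c'0 : c' != 0.
  rewrite /c'; have [b0|b0] := eqVneq b 0.
    by move: c0; rewrite b0 !mul0r !addr0 subr0.
  apply/eqP => h.
  have : om = (a + b * sF) / b by apply: (mulIf b0); rewrite mulfVK //; apply/eqP; rewrite -subr_eq0 -oppr_eq0; apply/eqP; rewrite -h; ring.
  move=> /eqP; apply/negP; apply: om_nF.
  by rewrite exprMn exprVn !frq !exprMn ha hb sF_F.
pose N0 := (a + b * om) * c'.
have N0e : N0 = a * a + a * b * sF - b * b * pF.
  by rewrite /N0 /c' (_ : (a + b * om) * (a + b * sF - b * om) = a * a + a * b * sF + b * b * (sF * om - om * om)); [rewrite om2; ring | ring].
have N0F : N0 ^+ q = N0.
  by rewrite N0e !(frq, frqN) !exprMn ha hb sF_F pF_F.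
have N00 : N0 != 0 by rewrite mulf_neq0.
exists ((a + b * sF) / N0), (- b / N0); split.
- by rewrite exprMn exprVn N0F frq exprMn hb sF_F ha.
- by rewrite exprMn exprVn N0F frqN hb.
- apply: (mulfI c0); rewrite mulfV //.
  rewrite (_ : (a + b * om) * ((a + b * sF) / N0 + - b / N0 * om) = N0 / N0).
    by rewrite mulfV.
  by rewrite /N0 /c'; field; apply/andP; split.
Qed.


Definition ell (z : L) : {set L} := Fspan2 q (gg z) (gg (om * z)).

Lemma gg_comb (a b z : L) : a ^+ q = a -> b ^+ q = b ->
  a * gg z + b * gg (om * z) = gg ((a + b * om) * z).
Proof.
move=> ha hb.
have hk : kP (a + b * om) by exists a, b.
rewrite (gg_lin _ (kP_M hk)) (gg_lin _ omM) /gg frq exprMn ha hb; ring.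
Qed.

Lemma ell_mem x z : x \in ell z -> exists c, kP c /\ x = gg (c * z).
Proof.
case/imset2P => a b; rewrite !inF => /eqP ha /eqP hb ->.
by exists (a + b * om); split; [exists a, b | rewrite gg_comb].
Qed.

Lemma ell_in c z : kP c -> gg (c * z) \in ell z.
Proof.
case=> a [b [ha hb ->]]; rewrite -gg_comb //.
by apply/imset2P; exists a b; rewrite ?inF ?ha ?hb.
Qed.

Lemma ell_sub z z' c : kP c -> z = c * z' -> ell z \subset ell z'.
Proof.
move=> hc -> ; apply/subsetP => x /ell_mem [c1 [h1 ->]].
by rewrite mulrA; apply: ell_in; apply: kP_mul.
Qed.

Lemma FspanP (x w : L) : x \in Fspan q w -> exists a, a ^+ q = a /\ x = a * w.
Proof. by case/imsetP => a; rewrite inF => /eqP ha ->; exists a. Qed.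

Lemma Fspan_self (w : L) : w \in Fspan q w.
Proof. by apply/imsetP; exists 1; rewrite ?mul1r // inF expr1n. Qed.

Lemma F_closed_mul (a b : L) : a ^+ q = a -> b ^+ q = b -> (a * b) ^+ q = a * b.
Proof. by move=> ha hb; rewrite exprMn ha hb. Qed.

Lemma Fspan_eq (u v m : L) : m ^+ q = m -> m != 0 -> u = m * v -> Fspan q u = Fspan q v.
Proof.
move=> hm m0 ->; apply/setP => x; apply/imsetP/imsetP => -[a].
  rewrite inF => /eqP ha ->; exists (a * m); rewrite ?mulrA // inF.
  by rewrite F_closed_mul.
rewrite inF => /eqP ha ->; exists (a / m); last by rewrite mulrA mulfVK.
by rewrite inF exprMn exprVn ha hm.
Qed.

Lemma ell_line z : z != 0 -> is_line q (ell z).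
Proof.
move=> z0; exists (gg z), (gg (om * z)); split => //.
  by apply/eqP => h; move: z0; rewrite -gg0 in h; rewrite (gg_inj h) eqxx.
apply/negP => /FspanP [a [ha h]].
have : om * z = a * z.
  apply: gg_inj; rewrite h -[a * gg z]addr0 -(mul0r (gg (om * z))).
  by rewrite gg_comb ?frq0 // mul0r addr0.
move/(mulIf z0) => e; move: om_notF; rewrite e ha eqxx //.
Qed.


Definition SS : {set {set L}} := ell @: [set z : L | z != 0].

Lemma gg_F (a z : L) : a ^+ q = a -> a * gg z = gg (a * z).
Proof. by move=> ha; rewrite gg_lin ?F_M // ha /gg mulrDr. Qed.

Lemma kP_F (a : L) : a ^+ q = a -> kP a.
Proof. by move=> ha; exists a, 0; rewrite frq0 mul0r addr0. Qed.

Lemma SS_spread : line_spread q SS.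
Proof.
split.
  by move=> l /imsetP [z]; rewrite inE => z0 ->; exact: ell_line.
move=> w w0.
have [ginv gK ginvK] := injF_bij gg_inj.
set z := ginv w; have hz : gg z = w by rewrite /z ginvK.
have z0 : z != 0 by apply/eqP => e; move: w0; rewrite -hz e gg0 eqxx.
exists (ell z); split.
  split; first by apply/imsetP; exists z; rewrite ?inE.
  apply/subsetP => x /FspanP [a [ha ->]]; rewrite -hz gg_F //.
  exact/ell_in/kP_F.
move=> l [/imsetP [z' z'0 ->] hsub].
have := subsetP hsub w (Fspan_self w); case/ell_mem => c [hc hw].
have ez : z = c * z' by apply: gg_inj; rewrite hz.
have c0 : c != 0 by apply/eqP => e; move: z0; rewrite ez e mul0r eqxx.
apply/eqP; rewrite eqEsubset; apply/andP; split; first exact: ell_sub hc ez.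
apply: (ell_sub (kP_inv hc c0)); by rewrite ez mulKf.
Qed.

Lemma SS_scat l : l \in SS -> scattered_line q n l.
Proof.
case/imsetP => z; rewrite inE => z0 -> w u v w0 u0 v0 hu hv hum hvm.
have [c1 [hc1 eu]] := ell_mem (subsetP hu u (Fspan_self u)).
have [c2 [hc2 ev]] := ell_mem (subsetP hv v (Fspan_self v)).
have /imsetP [mu hmu eu'] := subsetP hum u (Fspan_self u).
have /imsetP [nu hnu ev'] := subsetP hvm v (Fspan_self v).
move: hmu hnu; rewrite !inM => /eqP hmu /eqP hnu.
have nu0 : nu != 0 by apply/eqP => e; move: v0; rewrite ev' e mul0r eqxx.
pose m := mu / nu.
have mM : cj m = m by rewrite /m cjM cjV hmu hnu.
have uv : u = m * v by rewrite eu' ev' /m mulrA mulfVK.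
have c20 : c2 != 0 by apply/eqP => e; move: v0; rewrite ev e mul0r gg0 eqxx.
have uv' := uv.
move: uv; rewrite eu ev !gg_lin ?kP_M // => e.
set G := g1 z in e.
have [d0|d0] := eqVneq (m * c2 ^+ q - c1 ^+ q) 0.
  have dd : m * c2 ^+ q = c1 ^+ q by apply/eqP; rewrite -subr_eq0 d0.
  have e2 : (c1 - m * c2) * z = 0.
    rewrite mulrBl; apply/eqP; rewrite subr_eq0; apply/eqP.
    apply: (addIr (c1 ^+ q * G)); rewrite e -dd; ring.
  move/eqP: e2; rewrite mulf_eq0 (negbTE z0) orbF subr_eq0 => /eqP e1.
  have mq : m ^+ q = m.
    apply: (mulIf (expf_neq0 q c20)); rewrite -exprMn -e1 -dd //.
  rewrite -(gg_lin _ (kP_M hc1)) -(gg_lin _ (kP_M hc2)) -eu -ev; apply: (Fspan_eq mq _ uv').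
  by apply/eqP => m0; move: u0; rewrite uv' m0 mul0r eqxx.
exfalso; move/eqP: z0; apply.
apply: (@g1_noeig ((c1 - m * c2) / (m * c2 ^+ q - c1 ^+ q))).
  by rewrite cjM cjV !cjB !cjM !cjq !cjV hmu hnu !kP_M.
rewrite -/G; apply: (mulfI d0); rewrite mulrA mulrCA mulfV // mulr1.
apply/eqP; rewrite -subr_eq0; apply/eqP.
transitivity (m * (c2 * z + c2 ^+ q * G) - (c1 * z + c1 ^+ q * G)); first ring.
by rewrite e subrr.
Qed.

End Gam.

Lemma main_sec : exists S : {set {set L}},
  line_spread q S /\ (forall l, l \in S -> scattered_line q n l).
Proof.
have [gam hg] := prim_exists.
by exists (SS gam); split; [exact: SS_spread | exact: SS_scat].
Qed.

End Pf.

Local Close Scope ring_scope.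

Theorem mainTheorem10 (q n : nat) (L : finFieldType) :
  (exists p k : nat, [/\ prime p, (0 < k)%N & q = (p ^ k)%N]) ->
  (1 < n)%N -> ~~ odd n -> #|L| = (q ^ (2 * n))%N ->
  exists S : {set {set L}},
    line_spread q S /\ (forall l, l \in S -> scattered_line q n l).
Proof.
move=> [p [k [pp k0 qE]]] n1 nev cardL.
exact: (main_sec pp k0 qE n1 nev cardL).
Qed.
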